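(* Let $X$ be an Alexandroff space, $Y$ a topological space, and $f:X\to Y$ a map with closed graph. Then $f$ is continuous.
   Context: For a map $f:X\to Y$ its graph is $G_f=\{(x,f(x)):x\in X\}$; $f$ has closed graph if $G_f$ is closed in $X\times Y$ (product topology). A topological space $X$ is an Alexandroff space if the intersection of every nonempty family of open subsets of $X$ is open; equivalently, every point $a\in X$ has a smallest open neighbourhood, denoted $V_a$. *)

(* Defs.v *)
From HB Require Import structures.
From mathcomp Require Import all_boot all_order.
From mathcomp Require Import all_classical topology.
Set Implicit Arguments. Unset Strict Implicit. Unset Printing Implicit Defensive.
Local Open Scope classical_set_scope.

Definition alexandroff (X : topologicalType) : Prop :=
  forall S : set (set X), S !=set0 ->
    (forall A, S A -> open A) -> open (\bigcap_(A in S) A).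

Definition graph (X Y : Type) (f : X -> Y) : set (X * Y) :=
  [set p | p.2 = f p.1].

(* Main.v *)
Require Import Defs.
From mathcomp Require Import all_boot all_order.
From mathcomp Require Import all_classical topology.
Local Open Scope classical_set_scope.

Lemma graph_key (X Y : topologicalType) (f : X -> Y) (a x : X) (V : set X) :
  closed (graph f) -> (forall O, open O -> O a -> V `<=` O) -> V x -> graph f (a, f x).
Proof.
move=> hC hV Vx.
apply: hC => B.
case=> -[P Q] /= [PN QN] PQB.
move: PN; rewrite nbhsE => -[O [oO Oa] OP].
exists (x, f x); split; first by [].
apply: PQB; split => /=; last exact: nbhs_singleton.
by apply: OP; apply: (hV O).
Qed.

Theorem theorem3p2 (X Y : topologicalType) (f : X -> Y) :
  alexandroff X -> closed (graph f) -> continuous f.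
Proof.
move=> hA hC a.
pose S := [set A : set X | open A /\ A a].
have oV : open (\bigcap_(A in S) A).
  apply: hA; first by exists setT; split; [exact: openT|].
  by move=> A [].
have Va : (\bigcap_(A in S) A) a by move=> A [].
have hV : forall O, open O -> O a -> (\bigcap_(A in S) A) `<=` O.
  by move=> O oO Oa y Vy; apply: Vy.
have key : forall x, (\bigcap_(A in S) A) x -> f x = f a.
  move=> x Vx.
  have := @graph_key X Y f a x _ hC hV Vx.
  by rewrite /graph /= => ->.
move=> W /= WN.
rewrite nbhsE. exists (\bigcap_(A in S) A); first by split.
by move=> x Vx /=; rewrite key //; exact: nbhs_singleton.
Qed.
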